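(* Let $P,Q$ be orthogonal projections on an $N$-dimensional inner product space $V$ with ranks $p,q$ respectively. For $\lambda\in\mathbb{R}$ let $m(\lambda)$ be the multiplicity of $\lambda$ as an eigenvalue of $P+Q$ ($m(\lambda)=0$ if $\lambda$ is not an eigenvalue). Then: (i) $m(\lambda)>0$ implies $\lambda\in[0,2]$; (ii) $\sum_{\lambda\in[0,2]}m(\lambda)=N$; (iii) $m(1)\ge|p-q|$; (iv) for $\lambda\in(0,2)$, $m(\lambda)=m(2-\lambda)$; (v) $m(0)-m(2)=N-p-q$. Conversely, if $0\le p,q\le N$ are integers and $m:\mathbb{R}\to\mathbb{N}_0$ satisfies (i)–(v), then there exist orthogonal projections $P,Q$ on an $N$-dimensional space, of ranks $p,q$, such that $m$ is the eigenvalue multiplicity function of $P+Q$. *)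

(* Defs.v *)
From mathcomp Require Import all_boot all_order all_algebra.
From mathcomp Require Import reals.
Set Implicit Arguments. Unset Strict Implicit. Unset Printing Implicit Defensive.
Import Order.TTheory GRing.Theory Num.Theory.
Local Open Scope ring_scope.

(* Model of an N-dimensional real inner product space: R^N (row vectors)
   with the standard inner product; linear maps are N x N matrices. *)

Definition orth_proj (R : realType) (N : nat) (P : 'M[R]_N) : Prop :=
  P^T = P /\ P *m P = P.

Definition mult (R : realType) (N : nat) (A : 'M[R]_N) (l : R) : nat :=
  \rank (eigenspace A l).

(* sum_{l in [0,2]} m(l) = N, for m : R -> nat  (a sum of naturals over an
   infinite index set: it equals N iff the support in [0,2] is finite and the
   finite sum is N). *)
Definition sum_on_02_eq (R : realType) (m : R -> nat) (N : nat) : Prop :=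
  exists s : seq R,
    [/\ uniq s, (forall l, l \in s -> 0 <= l <= 2),
        (forall l, 0 <= l <= 2 -> (0 < m l)%N -> l \in s)
      & (\sum_(l <- s) m l)%N = N].

Definition mult_conditions (R : realType) (N p q : nat) (m : R -> nat) : Prop :=
  [/\ (forall l : R, (0 < m l)%N -> 0 <= l <= 2),
      sum_on_02_eq m N,
      `|(p%:Z - q%:Z)%R| <= (m 1)%:Z,
      (forall l : R, 0 < l < 2 -> m l = m (2 - l))
    & ((m 0)%:Z - (m 2)%:Z = N%:Z - p%:Z - q%:Z)%R].

(* Main.v *)
Require Import Defs.
From mathcomp Require Import all_boot all_order all_algebra.
From mathcomp Require Import reals.
From mathcomp Require Import complex.
From mathcomp Require Import ring lra zify.
Import Order.TTheory GRing.Theory Num.Theory.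
Local Open Scope ring_scope.

Section Fwd.
Variable R : realType.
Variable n : nat.
Implicit Types (P Q : 'M[R]_n) (u v : 'rV[R]_n).

Lemma entryB m k (A B : 'M[R]_(m, k)) i j : (A - B) i j = A i j - B i j.
Proof. by rewrite !mxE. Qed.
Lemma entryD m k (A B : 'M[R]_(m, k)) i j : (A + B) i j = A i j + B i j.
Proof. by rewrite !mxE. Qed.
Lemma entryZ m k (a : R) (A : 'M[R]_(m, k)) i j : (a *: A) i j = a * A i j.
Proof. by rewrite !mxE. Qed.

Definition sq v : R := (v *m v^T) 0 0.

Lemma sqE v : sq v = \sum_i v 0 i ^+ 2.
Proof. by rewrite /sq mxE; apply: eq_bigr => i _; rewrite mxE expr2. Qed.

Lemma sq_ge0 v : 0 <= sq v.
Proof. by rewrite sqE; apply: sumr_ge0 => i _; apply: sqr_ge0. Qed.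

Lemma sq_eq0 {v} : sq v = 0 -> v = 0.
Proof.
rewrite sqE => /psumr_eq0P H; apply/rowP => i; rewrite mxE.
by apply/eqP; rewrite -sqrf_eq0; apply/eqP; apply: H => // j _; apply: sqr_ge0.
Qed.

Lemma sq_gt0 {v} : v != 0 -> 0 < sq v.
Proof. by move=> vn; rewrite lt_def sq_ge0 andbT; apply: contra vn => /eqP/sq_eq0->. Qed.

Lemma proj_quad {P} v : orth_proj P -> (v *m P *m v^T) 0 0 = sq (v *m P).
Proof.
by case=> PT PP; rewrite /sq trmx_mul PT !mulmxA -(mulmxA v P P) PP.
Qed.

Lemma proj_compl {P} : orth_proj P -> orth_proj (1%:M - P).
Proof.
case=> PT PP; split; first by rewrite linearB /= trmx1 PT.
by rewrite !(mulmxBl, mulmxBr, mul1mx, mulmx1) PP subrr subr0.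
Qed.

Lemma sq_proj_le {P} v : orth_proj P -> sq (v *m P) <= sq v.
Proof.
move=> oP; have := proj_quad v (proj_compl oP).
rewrite mulmxBr mulmx1 mulmxBl entryB proj_quad // -/(sq v) => E.
by have := sq_ge0 (v - v *m P); rewrite -E subr_ge0.
Qed.

Lemma quadD P Q v : ((v *m (P + Q)) *m v^T) 0 0 = (v *m P *m v^T) 0 0 + (v *m Q *m v^T) 0 0.
Proof. by rewrite mulmxDr mulmxDl entryD. Qed.

Lemma eig_range {P Q v l} : orth_proj P -> orth_proj Q ->
  v *m (P + Q) = l *: v -> v != 0 -> 0 <= l <= 2.
Proof.
move=> oP oQ E vn; have := quadD P Q v.
rewrite E -scalemxAl entryZ -/(sq v) !proj_quad // => H.
have s0 := sq_gt0 vn; have a0 := sq_ge0 (v *m P); have b0 := sq_ge0 (v *m Q).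
have a1 := sq_proj_le v oP; have b1 := sq_proj_le v oQ.
apply/andP; split; nra.
Qed.

Lemma eig0 {P Q} v : orth_proj P -> orth_proj Q ->
  v *m (P + Q) = 0 -> v *m P = 0 /\ v *m Q = 0.
Proof.
move=> oP oQ E; have := quadD P Q v.
rewrite E mul0mx mxE !proj_quad // => H.
have a0 := sq_ge0 (v *m P); have b0 := sq_ge0 (v *m Q).
split; apply: sq_eq0; lra.
Qed.

Lemma eig2 {P Q} v : orth_proj P -> orth_proj Q ->
  v *m (P + Q) = 2 *: v -> v *m P = v /\ v *m Q = v.
Proof.
move=> oP oQ E.
have E' : v *m ((1%:M - P) + (1%:M - Q)) = 0.
  have -> : (1%:M - P) + (1%:M - Q) = 2 *: 1%:M - (P + Q).
    by apply/matrixP => i j; rewrite !mxE; ring.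
  by rewrite mulmxBr E -scalemxAr mulmx1 subrr.
have [] := eig0 _ (proj_compl oP) (proj_compl oQ) E'.
by rewrite !mulmxBr !mulmx1 => /eqP; rewrite subr_eq0 => /eqP <- /eqP; rewrite subr_eq0 => /eqP <-.
Qed.


Lemma mult_pos_eig (A : 'M[R]_n) l : (0 < mult A l)%N ->
  exists2 v : 'rV[R]_n, v *m A = l *: v & v != 0.
Proof. by rewrite /mult lt0n mxrank_eq0 => H; apply/eigenvalueP. Qed.

Lemma cond_i {P Q} : orth_proj P -> orth_proj Q ->
  forall l, (0 < mult (P + Q) l)%N -> 0 <= l <= 2.
Proof.
by move=> oP oQ l /mult_pos_eig [v E vn]; apply: (eig_range oP oQ E vn).
Qed.

Lemma sub_proj {P} v : orth_proj P -> (v <= P)%MS -> v *m P = v.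
Proof. by case=> _ PP /submxP [w ->]; rewrite -mulmxA PP. Qed.

Lemma sub_eig1 {P} Q : orth_proj P -> (P :&: kermx Q <= eigenspace (P + Q) 1)%MS.
Proof.
move=> oP; apply/row_subP => i; set v := row i _.
have vC : (v <= P :&: kermx Q)%MS by apply: row_sub.
rewrite sub_capmx in vC; case/andP: vC => vP /sub_kermxP vK.
by apply/eigenspaceP; rewrite mulmxDr sub_proj // vK addr0 scale1r.
Qed.

Lemma rank_ge1 {P} Q : orth_proj P -> (\rank P - \rank Q <= mult (P + Q) 1)%N.
Proof.
move=> oP; have h := mxrank_sum_cap P (kermx Q); rewrite mxrank_ker in h.
have h1 := rank_leq_col (P + kermx Q)%MS.
have h2 := mxrankS (sub_eig1 Q oP); have h3 := rank_leq_col Q.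
rewrite /mult; move: h h1 h2 h3; set a := \rank (_ + _)%MS; set b := \rank (_ :&: _)%MS; set c := \rank (eigenspace _ _); lia.
Qed.

Lemma DA_AD {P Q} : P *m P = P -> Q *m Q = Q ->
  (P - Q) *m (P + Q) = 2 *: (P - Q) - (P + Q) *m (P - Q).
Proof.
move=> PP QQ; rewrite !(mulmxDl, mulmxDr, mulmxN, mulNmx) PP QQ.
by apply/matrixP => i j; rewrite !mxE; ring.
Qed.

Lemma DD {P Q} : P *m P = P -> Q *m Q = Q ->
  (P - Q) *m (P - Q) = 2 *: (P + Q) - (P + Q) *m (P + Q).
Proof.
move=> PP QQ; rewrite !(mulmxDl, mulmxDr, mulmxN, mulNmx) PP QQ.
by apply/matrixP => i j; rewrite !mxE; ring.
Qed.

Lemma mult_sym_le {P Q} l : orth_proj P -> orth_proj Q -> 0 < l < 2 ->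
  (mult (P + Q) l <= mult (P + Q) (2 - l))%N.
Proof.
case=> _ PP [_ QQ] /andP[l0 l2].
set A := P + Q; set E := eigenspace A l; set D := P - Q.
have EA : E *m A = l *: E by apply/eigenspaceP.
have h1 : (E *m D <= eigenspace A (2 - l))%MS.
  apply/eigenspaceP; rewrite -mulmxA /D /A DA_AD // mulmxBr -scalemxAr mulmxA.
  by rewrite -/A EA -scalemxAl scalerBl.
have h2 : E *m D *m D = (l * (2 - l)) *: E.
  rewrite -mulmxA /D DD // mulmxBr -scalemxAr -/A EA mulmxA EA -scalemxAl EA.
  by rewrite !scalerA -scalerBl; congr (_ *: _); ring.
have nz : l * (2 - l) != 0 by apply/lt0r_neq0/mulr_gt0 => //; rewrite subr_gt0.
rewrite /mult -/A -/E.
have -> : \rank E = \rank ((l * (2 - l)) *: E) by rewrite (eqmx_scale E nz).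
rewrite -h2.
by apply: leq_trans (mxrankM_maxl _ _) (mxrankS h1).
Qed.

Lemma cond_iv {P Q} : orth_proj P -> orth_proj Q ->
  forall l : R, 0 < l < 2 -> mult (P + Q) l = mult (P + Q) (2 - l).
Proof.
move=> oP oQ l /andP[l0 l2]; apply/eqP; rewrite eqn_leq mult_sym_le ?l0 //=.
have := @mult_sym_le P Q (2 - l) oP oQ; have -> : 2 - (2 - l) = l by ring.
apply.
by rewrite subr_gt0 l2 /= ltrBlDr ltrDl.
Qed.

Lemma eig0_ker {P Q} : orth_proj P -> orth_proj Q ->
  (eigenspace (P + Q) 0 :=: kermx (row_mx P Q))%MS.
Proof.
move=> oP oQ; apply/eqmxP/andP; split; apply/row_subP => i.
  have /eigenspaceP := row_sub i (eigenspace (P + Q) 0); rewrite scale0r.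
  case/(eig0 _ oP oQ) => e1 e2.
  by apply/sub_kermxP; rewrite mul_mx_row e1 e2 row_mx0.
have /sub_kermxP := row_sub i (kermx (row_mx P Q)).
rewrite mul_mx_row => /eqP; rewrite row_mx_eq0 => /andP[/eqP e1 /eqP e2].
by apply/eigenspaceP; rewrite mulmxDr e1 e2 addr0 scale0r.
Qed.

Lemma eig2_cap {P Q} : orth_proj P -> orth_proj Q ->
  (eigenspace (P + Q) 2 :=: P :&: Q)%MS.
Proof.
move=> oP oQ; apply/eqmxP/andP; split; apply/row_subP => i.
  have /eigenspaceP := row_sub i (eigenspace (P + Q) 2).
  case/(eig2 _ oP oQ) => e1 e2.
  by rewrite sub_capmx -{1}e1 -{2}e2 !submxMl.
have := row_sub i (P :&: Q)%MS; rewrite sub_capmx => /andP[vP vQ].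
apply/eigenspaceP; rewrite mulmxDr !sub_proj //.
by rewrite scaler_nat mulr2n.
Qed.

Lemma cond_v {P Q} : orth_proj P -> orth_proj Q ->
  (mult (P + Q) 0 + \rank P + \rank Q = n + mult (P + Q) 2)%N.
Proof.
move=> oP oQ; rewrite /mult (eig0_ker oP oQ) (eig2_cap oP oQ).
rewrite mxrank_ker -mxrank_tr tr_row_mx.
case: oP => -> _; case: oQ => -> _.
rewrite -(addsmxE P Q).
have h := mxrank_sum_cap P Q; have h1 := rank_leq_col (P + Q)%MS.
lia.
Qed.

End Fwd.

Lemma sumsmx_seq_sup (F : fieldType) n (I : eqType) (s : seq I) (G : I -> 'M[F]_n) x :
  x \in s -> (G x <= \sum_(y <- s) G y)%MS.
Proof.
elim: s => // y s IH; rewrite inE big_cons => /orP[/eqP->|xs].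
  exact: addsmxSl.
exact: submx_trans (IH xs) (addsmxSr _ _).
Qed.

Lemma sym_diag (R : realType) n (A : 'M[R]_n) : A^T = A ->
  exists rs : seq R, uniq rs /\ (1%:M <= \sum_(r <- rs) eigenspace A r)%MS.
Proof.
move=> AT.
pose toC := real_complex R.
pose B := map_mx toC A.
have Bsym : B \is symmetricmx.
  apply/is_hermitianmxP; rewrite expr0 scale1r map_mx_id // /B map_trmx AT //.
have Breal : B \is a realmx.
  by apply/mxOverP => i j; rewrite mxE /toC /= complex_real.
have Bn : B \is normalmx := symmetric_normalmx Bsym Breal.
have Bh : B \is hermsymmx := realsym_hermsym Bsym Breal.
have /orthomx_spectralP BE := Bn.
have dreal := hermitian_spectral_diag_real Bh.
set Pm := spectralmx B in BE; set d := spectral_diag B in BE dreal.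
have Pu : Pm \in unitmx := spectral_unit B.
exists (undup [seq complex.Re (d 0 i) | i <- enum 'I_n]); split; first exact: undup_uniq.
rewrite -(map_submx toC) map_mx1.
apply: submx_trans (_ : Pm <= _)%MS; first by rewrite sub1mx row_full_unit.
apply/row_subP => i.
have ev : (row i Pm <= eigenspace B (d 0 i))%MS.
  apply/eigenspaceP; rewrite -row_mul BE !mulmxA mulmxV // mul1mx.
  by rewrite mul_diag_mx; apply/rowP => j; rewrite !mxE.
apply: submx_trans ev _.
have dr : d 0 i \is Num.real by move/mxOverP: dreal; apply.
rewrite -(RRe_real dr) -map_eigenspace map_submx.
apply: sumsmx_seq_sup; rewrite mem_undup; apply/mapP; exists i => //.
by rewrite mem_enum.
Qed.

Lemma eig_sum_rank {F : fieldType} {n} (A : 'M[F]_n) {rs : seq F} : uniq rs ->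
  \rank (\sum_(r <- rs) eigenspace A r)%MS = (\sum_(r <- rs) \rank (eigenspace A r))%N.
Proof.
move=> U; rewrite (big_nth 0) big_mkord [RHS](big_nth 0) big_mkord.
have D : mxdirect (\sum_(i < size rs) eigenspace A rs`_i).
  apply: mxdirect_sum_eigenspace => i j _ _ e; apply: val_inj.
  by apply: uniqP e; rewrite ?inE.
by rewrite (mxdirectP D).
Qed.

Lemma cond_ii (R : realType) n (P Q : 'M[R]_n) : orth_proj P -> orth_proj Q ->
  sum_on_02_eq (mult (P + Q)) n.
Proof.
move=> oP oQ.
have AT : (P + Q)^T = P + Q by case: oP => PT _; case: oQ => QT _; rewrite linearD /= PT QT.
have [rs [U full]] := @sym_diag _ _ _ AT.
have rk : \rank (\sum_(r <- rs) eigenspace (P + Q) r)%MS = n.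
  by apply/eqP; move: full; rewrite sub1mx.
have Hs : (\sum_(r <- rs) mult (P + Q) r)%N = n by rewrite /mult -(eig_sum_rank _ U).
exists [seq r <- rs | (0 < mult (P + Q) r)%N]; split.
- exact: filter_uniq.
- by move=> l; rewrite mem_filter => /andP[/(cond_i _ _ oP oQ)].
- move=> l _ ml; rewrite mem_filter ml /=; apply/negPn/negP => ln.
  have U' : uniq (l :: rs) by rewrite /= ln.
  have h := eig_sum_rank (P + Q) U'.
  have h2 := rank_leq_col (\sum_(r <- l :: rs) eigenspace (P + Q) r)%MS.
  rewrite !big_cons -(eig_sum_rank _ U) rk in h h2.
  rewrite /mult in ml; lia.
- apply: etrans Hs; rewrite big_filter [RHS](bigID (fun r => (0 < mult (P + Q) r)%N)) /=.
  by rewrite [X in (_ + X)%N]big1 ?addn0 // => r; rewrite lt0n negbK => /eqP.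
Qed.

Theorem forward (R : realType) (N : nat) (P Q : 'M[R]_N) :
  orth_proj P -> orth_proj Q ->
  mult_conditions N (\rank P) (\rank Q) (mult (P + Q)).
Proof.
move=> oP oQ; split.
- exact: cond_i _ _ oP oQ.
- exact: cond_ii oP oQ.
- have h1 := rank_ge1 _ _ Q oP; have h2 := rank_ge1 _ _ P oQ; rewrite addrC in h2.
  move: h1 h2; set a := mult _ _; lia.
- exact: cond_iv _ _ oP oQ.
- have := cond_v _ _ oP oQ; lia.
Qed.

Section Bwd.
Variable R : realType.

Definition realizable (N p q : nat) (f : R -> nat) : Prop :=
  exists P Q : 'M[R]_N,
    [/\ orth_proj P, orth_proj Q, \rank P = p, \rank Q = q
      & forall l : R, mult (P + Q) l = f l].

Lemma real_ext {N p q f g} : (forall l, f l = g l) ->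
  realizable N p q f -> realizable N p q g.
Proof.
move=> fg [P [Q [oP oQ rP rQ m]]]; exists P, Q; split => // l.
by rewrite m fg.
Qed.

Lemma real_0 : realizable 0 0 0 (fun _ => 0%N).
Proof.
exists 0, 0; split => //.
- by split; rewrite ?trmx0 ?mul0mx.
- by split; rewrite ?trmx0 ?mul0mx.
- by rewrite mxrank0.
- by rewrite mxrank0.
- by move=> l; apply/eqP; rewrite -leqn0 /mult rank_leq_row.
Qed.

Lemma orth_block N1 N2 (P1 : 'M[R]_N1) (P2 : 'M[R]_N2) :
  orth_proj P1 -> orth_proj P2 -> orth_proj (block_mx P1 0 0 P2).
Proof.
case=> T1 E1 [T2 E2]; split; first by rewrite tr_block_mx T1 T2 !trmx0.
by rewrite mulmx_block !mulmx0 !mul0mx !addr0 !add0r E1 E2.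
Qed.

Lemma mult_block N1 N2 (A : 'M[R]_N1) (B : 'M[R]_N2) l :
  mult (block_mx A 0 0 B) l = (mult A l + mult B l)%N.
Proof.
rewrite /mult /eigenspace !mxrank_ker (scalar_mx_block N1 N2 l) opp_block_mx.
rewrite add_block_mx !oppr0 !addr0 rank_diag_block_mx.
have h1 := rank_leq_row (A - l%:M); have h2 := rank_leq_row (B - l%:M).
move: h1 h2; set a := \rank (A - _); set b := \rank (B - _); lia.
Qed.

Lemma real_sum {N1 N2 p1 p2 q1 q2 f1 f2} :
  realizable N1 p1 q1 f1 -> realizable N2 p2 q2 f2 ->
  realizable (N1 + N2) (p1 + p2) (q1 + q2) (fun l => (f1 l + f2 l)%N).
Proof.
move=> [P1 [Q1 [o1 o1' r1 r1' m1]]] [P2 [Q2 [o2 o2' r2 r2' m2]]].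
exists (block_mx P1 0 0 P2), (block_mx Q1 0 0 Q2); split.
- exact: orth_block.
- exact: orth_block.
- by rewrite rank_diag_block_mx r1 r2.
- by rewrite rank_diag_block_mx r1' r2'.
- by move=> l; rewrite add_block_mx !addr0 mult_block m1 m2.
Qed.

Lemma real_iter {N p q f} k : realizable N p q f ->
  realizable (k * N) (k * p) (k * q) (fun l => (k * f l)%N).
Proof.
move=> H; elim: k => [|k IH].
  by rewrite !mul0n; apply: (real_ext _ real_0) => l; rewrite mul0n.
rewrite !mulSn; apply: (real_ext _ (real_sum H IH)) => l; by rewrite mulSn.
Qed.

Lemma mult_scalar k (x l : R) :
  mult (x%:M : 'M[R]_k) l = if x == l then k else 0%N.
Proof.
rewrite /mult /eigenspace mxrank_ker.
have -> : x%:M - l%:M = (x - l)%:M :> 'M[R]_k.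
  by apply/matrixP => i j; rewrite !mxE mulrnBl.
case: eqP => [->|ne]; first by rewrite subrr -(scalemx1 _ 0) scale0r mxrank0 subn0.
have nz : x - l != 0 by rewrite subr_eq0; apply/eqP.
by rewrite -scalemx1 (eqmx_scale _ nz) mxrank1 subnn.
Qed.

Lemma real_scalar k (a b : bool) :
  realizable k (a * k) (b * k) (fun l => if (a%:R + b%:R : R) == l then k else 0%N).
Proof.
have oS (c : bool) : orth_proj ((c%:R : R)%:M : 'M[R]_k).
  split; first by rewrite tr_scalar_mx.
  by rewrite -scalar_mxM; case: c; rewrite ?mul1r ?mul0r.
have rS (c : bool) : \rank ((c%:R : R)%:M : 'M[R]_k) = (c * k)%N.
  case: c; first by rewrite mxrank1 mul1n.
  by rewrite -(scalemx1 _ 0) scale0r mxrank0.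
exists (a%:R%:M), (b%:R%:M); split => // l.
have -> : (a%:R : R)%:M + (b%:R)%:M = (a%:R + b%:R : R)%:M :> 'M[R]_k.
  by apply/matrixP => i j; rewrite !mxE mulrnDl.
exact: mult_scalar.
Qed.

End Bwd.

Section Pair.
Variable R : realType.

Let o0 : 'I_2 := ord0.
Let o1 : 'I_2 := ord_max.

Lemma sum2 (F : 'I_2 -> R) : \sum_(k < 2) F k = F o0 + F o1.
Proof. by rewrite big_ord_recr big_ord1 /=; congr (F _ + _); apply: val_inj. Qed.

Lemma ord2 (j : 'I_2) : j = o0 \/ j = o1.
Proof. by case: j => [[|[|]]] // ?; [left|right]; apply: val_inj. Qed.

Lemma rank1_proj N (u : 'rV[R]_N) : u *m u^T = 1%:M ->
  orth_proj (u^T *m u) /\ \rank (u^T *m u) = 1%N.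
Proof.
move=> uu; split.
  split; first by rewrite trmx_mul trmxK.
  by rewrite mulmxA -(mulmxA u^T) uu mulmx1.
apply/eqP; rewrite eqn_leq; apply/andP; split.
  by apply: leq_trans (mxrankM_maxr _ _) (rank_leq_row _).
rewrite lt0n mxrank_eq0; apply/eqP => H.
have : u *m (u^T *m u) = u by rewrite mulmxA uu mul1mx.
rewrite H mulmx0 => u0; move: uu; rewrite -u0 mul0mx => /matrixP/(_ ord0 ord0).
by rewrite !mxE eqxx /= => /eqP; rewrite eq_sym oner_eq0.
Qed.

Lemma rank_ker22 (K : 'M[R]_2) : K o0 o1 = K o1 o0 -> K o0 o1 != 0 ->
  \rank (kermx K) = (K o0 o0 * K o1 o1 - K o0 o1 * K o1 o0 == 0 : nat).
Proof.
move=> sym bn; rewrite mxrank_ker.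
set b := K o0 o1; set a := K o0 o0; set d := K o1 o1.
have Kn : K != 0 by apply: contra bn => /eqP ->; rewrite mxE.
have rK : (0 < \rank K)%N by rewrite lt0n mxrank_eq0.
have r2 := rank_leq_row K.
have vK (v : 'rV[R]_2) : v *m K = 0 ->
    v 0 o0 * a + v 0 o1 * b = 0 /\ v 0 o0 * b + v 0 o1 * d = 0.
  move=> /rowP H; have := H o0; have := H o1; rewrite !mxE !sum2 -sym => h1 h0.
  by split.
case: eqP => [dz|dnz] /=.
  pose w := \row_(j < 2) (if j == o0 then b else - a).
  have wK : w *m K = 0.
    apply/rowP => j; rewrite !mxE sum2 !mxE /=.
    move: dz; rewrite -sym -/b => dz.
    by case: (ord2 j) => ->; rewrite -?sym -/a -/b -/d; nra.
  have wn : w != 0.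
    by apply: contra bn => /eqP/rowP/(_ o0); rewrite !mxE ?eqxx => /eqP.
  have : (\rank w <= \rank (kermx K))%N by apply: mxrankS; apply/sub_kermxP.
  rewrite rank_rV wn mxrank_ker /=; move: rK r2; set r := \rank K; lia.
suff -> : \rank K = 2%N by [].
apply/eqP; rewrite eqn_leq r2 /=.
have : kermx K == 0.
  apply/eqP/row_matrixP => i; rewrite row0; set v := row i _.
  have /sub_kermxP/vK [e0 e1] := row_sub i (kermx K).
  have dn : a * d - b * b != 0 by move: dnz; rewrite -sym => /eqP.
  have z0 : v 0 o0 = 0.
    apply/eqP; rewrite -(mulIr_eq0 _ (mulIf dn)).
    have -> : v 0 o0 * (a * d - b * b) = d * (v 0 o0 * a + v 0 o1 * b) - b * (v 0 o0 * b + v 0 o1 * d) by ring.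
    by rewrite e0 e1 !mulr0 subrr.
  have z1 : v 0 o1 = 0.
    apply/eqP; rewrite -(mulIr_eq0 _ (mulIf dn)).
    have -> : v 0 o1 * (a * d - b * b) = a * (v 0 o0 * b + v 0 o1 * d) - b * (v 0 o0 * a + v 0 o1 * b) by ring.
    by rewrite e0 e1 !mulr0 subrr.
  apply/rowP => j; case: (ord2 j) => ->; by rewrite ?z0 ?z1 mxE.
rewrite -mxrank_eq0 mxrank_ker; move: r2; set r := \rank K; lia.
Qed.


Lemma real_pair (x : R) : 0 < x < 1 ->
  realizable R 2 1 1 (fun l => ((l == x) + (l == (2 - x)%R))%N).
Proof.
move=> /andP[x0 x1].
set c := 1 - x.
have c0 : 0 < c by rewrite /c subr_gt0.
have c1 : c < 1 by rewrite /c ltrBlDr ltrDl.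
set s := Num.sqrt (1 - c ^+ 2).
have h1 : 0 < 1 - c ^+ 2 by rewrite subr_gt0 expr2; nra.
have s2 : s ^+ 2 = 1 - c ^+ 2 by rewrite sqr_sqrtr // ltW.
have s0 : 0 < s by rewrite sqrtr_gt0.
pose e := \row_(j < 2) (if j == o0 then 1 else 0 : R).
pose u := \row_(j < 2) (if j == o0 then c else s).
have ee : e *m e^T = 1%:M.
  apply/matrixP => i j; rewrite !ord1 !mxE sum2 !mxE /=.
  ring.
have uu : u *m u^T = 1%:M.
  apply/matrixP => i j; rewrite !ord1 !mxE sum2 !mxE /=.
  by move: s2; rewrite !expr2 => ->; ring.
have [oP rP] := rank1_proj _ _ ee; have [oQ rQ] := rank1_proj _ _ uu.
exists (e^T *m e), (u^T *m u); split => // l.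
rewrite /mult /eigenspace rank_ker22; rewrite ?mxE ?big_ord1 ?mxE /=.
- match goal with |- nat_of_bool (?D == 0) = _ => have E : D = (x - l) * ((2 - x) - l) end.
    have ss : s * s = 1 - c * c by rewrite -expr2 s2 expr2.
    transitivity ((1 + c * c - l) * (s * s - l) - c * c * (s * s)); first ring.
    by rewrite ss /c; ring.
  have hx : x != 2 - x by apply/eqP => h; lra.
  rewrite E mulf_eq0 !subr_eq0.
  case: (eqVneq l x) => [->|ne]; first by rewrite (negbTE hx).
  by rewrite /= eq_sym.
- ring.
- rewrite mulr0n subr0 mulr0 add0r; apply/lt0r_neq0/mulr_gt0 => //.
Qed.

End Pair.

Arguments real_ext {R N p q f g}.
Arguments real_sum {R N1 N2 p1 p2 q1 q2 f1 f2}.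
Arguments real_iter {R N p q f}.

Ltac rcontr R := suff: (0:R) < 0 by rewrite ltxx.

Section Final.
Variable R : realType.

Lemma real_pairs (m : R -> nat) (t : seq R) : (forall x, x \in t -> 0 < x < 1) ->
  realizable R (\sum_(x <- t) m x * 2) (\sum_(x <- t) m x) (\sum_(x <- t) m x)
    (fun l => \sum_(x <- t) m x * ((l == x) + (l == (2 - x)%R)))%N.
Proof.
elim: t => [|x t IH] H.
  by rewrite !big_nil; apply: (real_ext _ (real_0 R)) => l; rewrite big_nil.
have hx : 0 < x < 1 by apply: H; rewrite mem_head.
have IH' : realizable R (\sum_(x <- t) m x * 2) (\sum_(x <- t) m x) (\sum_(x <- t) m x)
    (fun l => \sum_(x <- t) m x * ((l == x) + (l == (2 - x)%R)))%N.
  by apply: IH => y yt; apply: H; rewrite inE yt orbT.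
have := real_sum (real_iter (m x) (real_pair R x hx)) IH'.
rewrite !big_cons !muln1 => Hr; apply: (real_ext _ Hr) => l; by rewrite big_cons.
Qed.

Lemma sum_ind (m : R -> nat) (t : seq R) l : uniq t ->
  (\sum_(x <- t) m x * (l == x))%N = if l \in t then m l else 0%N.
Proof.
elim: t => [|x t IH] /=; first by rewrite big_nil.
case/andP => xt ut; rewrite big_cons IH // inE.
case: (eqVneq l x) => [->|ne] /=; last by rewrite muln0.
by rewrite (negbTE xt) muln1 addn0.
Qed.

Lemma sum_supp (m : R -> nat) (s t : seq R) : uniq s -> uniq t ->
  (forall x, (0 < m x)%N -> (x \in s) = (x \in t)) ->
  (\sum_(x <- s) m x = \sum_(x <- t) m x)%N.
Proof.
move=> us ut E.
have H u : (\sum_(x <- u) m x = \sum_(x <- [seq x <- u | (0 < m x)%N]) m x)%N.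
  rewrite big_filter [LHS](bigID (fun x => (0 < m x)%N)) /=.
  by rewrite [X in (_ + X)%N]big1 ?addn0 // => r; rewrite lt0n negbK => /eqP.
rewrite H [RHS]H; apply: perm_big; apply: uniq_perm; rewrite ?filter_uniq //.
by move=> x; rewrite !mem_filter; case h: (0 < m x)%N => //=; apply: E.
Qed.


Lemma real_eq {N N' p p' q q' f g} : realizable R N' p' q' f -> N' = N -> p' = p -> q' = q ->
  (forall l, f l = g l) -> realizable R N p q g.
Proof. by move=> H <- <- <- fg; apply: (real_ext fg H). Qed.

Theorem backward (N p q : nat) (m : R -> nat) :
  (p <= N)%N -> (q <= N)%N -> mult_conditions N p q m ->
  exists P Q : 'M[R]_N,
    [/\ orth_proj P, orth_proj Q, \rank P = p, \rank Q = q
      & forall l : R, mult (P + Q) l = m l].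
Proof.
move=> pN qN [Hi [s [Us Hs1 Hs2 Hsum]] Hiii Hiv Hv].
set s1 := [seq x <- s | 0 < x < 1].
have s1P x : x \in s1 -> 0 < x < 1 by rewrite mem_filter => /andP[].
have Us1 : uniq s1 by rewrite filter_uniq.
have ins1 x : 0 < x < 1 -> (0 < m x)%N -> x \in s1.
  move=> hx mx; rewrite mem_filter hx /=; apply: Hs2 => //.
  by case/andP: hx => h1 h2; apply/andP; split; lra.
set k := (\sum_(x <- s1) m x)%N.
have Hcount : N = (m 0%R + m 1%R + m 2%R + k + k)%N.
  rewrite -Hsum.
  pose t := [:: 0; 1; 2] ++ s1 ++ [seq 2 - x | x <- s1].
  have ut : uniq t.
    rewrite /t cat_uniq; apply/and3P; split.
    - have d01 : 0 != 1 :> R by rewrite lt_eqF // ltr01.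
      have d02 : 0 != 2 :> R by rewrite lt_eqF // ltr0n.
      have d12 : 1 != 2 :> R by rewrite lt_eqF // ltr1n.
      by rewrite /= !inE !negb_or d01 d02 d12.
    - apply/hasPn => y; rewrite mem_cat => /orP[/s1P|/mapP[z /s1P hz ->]].
        move=> /andP[h1 h2]; rewrite !inE; apply/negP => /or3P [] /eqP e; rcontr R; lra.
      case/andP: hz => h1 h2; rewrite !inE; apply/negP => /or3P [] /eqP e; rcontr R; lra.
    - rewrite cat_uniq Us1 map_inj_uniq //=; last by move=> a b /= h; lra.
      rewrite Us1 andbT; apply/hasPn => y /mapP[z /s1P hz ->]; apply/negP => /s1P hz'.
      by case/andP: hz => h1 h2; case/andP: hz' => h3 h4; rcontr R; lra.
  rewrite (@sum_supp m s t Us ut).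
    rewrite /t !big_cat /= !big_cons big_nil big_map.
    have -> : (\sum_(x <- s1) m (2 - x)%R = k)%N.
      apply: eq_big_seq => x /s1P /andP[h1 h2]; rewrite -Hiv //; apply/andP; split; lra.
    rewrite /k; have E (a b c d : nat) : (a + (b + (c + 0)) + (d + d) = a + b + c + d + d)%N by lia.
    exact: E.
  move=> x mx; have /andP[x0 x2] := Hi x mx.
  apply/idP/idP => [xs|xt]; last by apply: Hs2 => //; apply/andP.
  rewrite /t !mem_cat !inE.
  have [->|n0] := eqVneq x 0; first by [].
  have [->|n1] := eqVneq x 1; first by rewrite ?orbT.
  have [->|n2] := eqVneq x 2; first by rewrite ?orbT.
  have x0' : 0 < x by rewrite lt_def n0 x0.
  have x2' : x < 2 by rewrite lt_def eq_sym n2 x2.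
  case: (ltrP x 1) => x1.
    by rewrite (ins1 x _ mx) ?orbT //; apply/andP.
  have x1' : 1 < x by rewrite lt_def n1 x1.
  have y01 : 0 < 2 - x < 1 by apply/andP; split; lra.
  have my : (0 < m (2 - x)%R)%N by rewrite -Hiv //; apply/andP.
  have : x \in [seq 2 - x | x <- s1].
    by apply/mapP; exists (2 - x); [apply: ins1 | ring].
  by move=> ->; rewrite !orbT.
have Hv' : (m 0%R + p + q = N + m 2%R)%N by move: Hv; lia.
have H3 : (p <= q + m 1%R)%N by move: Hiii; lia.
have H3' : (q <= p + m 1%R)%N by move: Hiii; lia.
set a1 := (p - m 2%R - k)%N; set a2 := (q - m 2%R - k)%N.
have := real_sum (real_scalar R (m 0) false false) (real_sum (real_scalar R (m 2) true true)
  (real_sum (real_scalar R a1 true false) (real_sum (real_scalar R a2 false true) (real_pairs m s1 s1P)))).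
move=> Hr; apply: (real_eq Hr).
- rewrite -big_distrl /= -/k; rewrite /a1 /a2; lia.
- rewrite /= -/k; rewrite /a1 /a2; lia.
- rewrite /= -/k; rewrite /a1 /a2; lia.
move=> l.
have c00 : ((false:nat)%:R + (false:nat)%:R : R) = 0 by rewrite /= mulr0n addr0.
have c11 : ((true:nat)%:R + (true:nat)%:R : R) = 2 by rewrite -natrD.
have c10 : ((true:nat)%:R + (false:nat)%:R : R) = 1 by rewrite /= mulr0n mulr1n addr0.
have c01 : ((false:nat)%:R + (true:nat)%:R : R) = 1 by rewrite /= mulr0n mulr1n add0r.
rewrite c00 c11 c10 c01.
rewrite (eq_bigr _ (fun x _ => mulnDr (m x) _ _)) big_split /= sum_ind //.
have e2 x : (l == 2 - x) = (2 - l == x) by apply/eqP/eqP => h; lra.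
rewrite (eq_bigr (fun x => m x * ((2 - l)%R == x))%N); last by move=> x _; rewrite e2.
rewrite sum_ind //.
have ea : (a1 + a2 = m 1%R)%N by rewrite /a1 /a2; lia.
have F y : y <= 0 \/ 1 <= y -> (y \in s1) = false.
  by move=> h; apply/negbTE/negP => /s1P/andP[a b]; rcontr R; case: h => h; lra.
have eqF (x y : R) : x < y \/ y < x -> (x == y) = false.
  by case=> h; [exact: lt_eqF | exact: gt_eqF].
have [e|n0] := eqVneq l 0.
  rewrite e (eqF 2 0); last by right; lra.
  rewrite (eqF 1 0); last by right; lra.
  rewrite (F 0); last by left; lra.
  rewrite (F (2 - 0)); last by right; lra.
  by rewrite !addn0.
have [e|n2] := eqVneq l 2.
  rewrite e (eqF 1 2); last by left; lra.
  rewrite (F 2); last by right; lra.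
  rewrite (F (2 - 2)); last by left; lra.
  by rewrite !addn0 add0n.
have [e|n1] := eqVneq l 1.
  rewrite e.
  rewrite (F 1); last by right; lra.
  rewrite (F (2 - 1)); last by right; lra.
  by rewrite !addn0 !add0n ea.
rewrite !add0n.
case: (posnP (m l)) => ml.
  rewrite ml; case: ifP => _; case: ifP => // h2;
  have /andP[a b] := s1P _ h2; rewrite -Hiv ?ml //; apply/andP; split; lra.
have /andP[l0 l2] := Hi l ml.
have l0' : 0 < l by rewrite lt_def n0 l0.
have l2' : l < 2 by rewrite lt_def eq_sym n2 l2.
case: (ltrP l 1) => l1.
  rewrite (ins1 l _ ml); last by apply/andP.
  by rewrite (F (2 - l)) ?addn0 //; right; lra.
have l1' : 1 < l by rewrite lt_def n1 l1.
rewrite (F l); last by right; lra.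
rewrite (ins1 (2 - l)); first by rewrite -Hiv //; apply/andP.
  by apply/andP; split; lra.
by rewrite -Hiv //; apply/andP.
Qed.

End Final.


Theorem lemma3p2 (R : realType) :
  (forall (N : nat) (P Q : 'M[R]_N),
      orth_proj P -> orth_proj Q ->
      mult_conditions N (\rank P) (\rank Q) (mult (P + Q)))
  /\
  (forall (N p q : nat) (m : R -> nat),
      (p <= N)%N -> (q <= N)%N -> mult_conditions N p q m ->
      exists P Q : 'M[R]_N,
        [/\ orth_proj P, orth_proj Q, \rank P = p, \rank Q = q
          & forall l : R, mult (P + Q) l = m l]).
Proof.
split.
  by move=> N P Q oP oQ; exact: forward oP oQ.
by move=> N p q m pN qN H; exact: backward pN qN H.
Qed.
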